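(* Let $N\ge3$ and let $T_{ab}$ be a rank-2 tensor. The following are equivalent: (i) $T_{ac}T_b{}^c=fg_{ab}$ for some real $f\neq0$; (ii) for some $f>0$, both $T_{ac}T_b{}^c=fg_{ab}$ and $T_{ca}T^c{}_b=fg_{ab}$; (iii) $T_a{}^b$ defines a non-singular null-cone preserving map. Moreover, in this case $T_a{}^b$ is bi-preserving, $L_a{}^b=T_a{}^b/\sqrt f$ is a Lorentz transformation, and $T_{ab}\in\mathcal{DP}\cup-\mathcal{DP}$.
   Context: Lorentzian metric $g_{ab}$ of signature $(+,-,\dots,-)$ with a time orientation; null: $v\ne0$, $v_av^a=0$; causal: $v\neq0$, $v_av^a\ge0$. $T_a{}^b$ is a null-cone preserving map if $k^aT_a{}^b$ is null or zero for every null $k$, bi-preserving if also $T_a{}^bk_b$ is null or zero for every null $k$, non-singular if $\det(T_a{}^b)\neq0$. A Lorentz transformation is $L_a{}^b$ with $g_{cd}L_a{}^cL_b{}^d=g_{ab}$. $\mathcal{DP}$ is the set of rank-2 tensors $T_{ab}$ with $T_{ab}u^av^b\ge0$ for all causal future-pointing $u,v$; $-\mathcal{DP}=\{T:-T\in\mathcal{DP}\}$. *)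

(* Defs.v *)
From HB Require Import structures.
From mathcomp Require Import all_boot all_order all_algebra.
From mathcomp Require Import reals.
Set Implicit Arguments. Unset Strict Implicit. Unset Printing Implicit Defensive.
Import Order.TTheory GRing.Theory Num.Theory.
Local Open Scope ring_scope.

(* Conventions: a (contravariant) vector v^a and a covector w_a are both
   represented as row vectors 'rV[R]_N in a fixed basis.  A rank-2 tensor
   with lower indices T_ab is a matrix T with T a b = T_ab.  The metric g_ab
   is the matrix G; g^ab is invmx G.  The mixed tensor T_a^b = T_ac g^cb is
   the matrix T *m invmx G. *)

Section Defs.
Variables (R : realType) (N : nat).

Definition eta_mx : 'M[R]_N :=
  diag_mx (\row_(i < N) (if (i : nat) == 0%N then 1 else -1)).

Definition lorentzian (G : 'M[R]_N) : Prop :=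
  G^T = G /\ exists P : 'M[R]_N, P \in unitmx /\ P^T *m G *m P = eta_mx.

Definition gdot (G : 'M[R]_N) (u v : 'rV[R]_N) : R := (u *m G *m v^T) 0 0.

Definition gdot_co (G : 'M[R]_N) (w z : 'rV[R]_N) : R := (w *m invmx G *m z^T) 0 0.

Definition null (G : 'M[R]_N) (v : 'rV[R]_N) : Prop := v != 0 /\ gdot G v v = 0.
Definition causal (G : 'M[R]_N) (v : 'rV[R]_N) : Prop := v != 0 /\ 0 <= gdot G v v.
Definition null_co (G : 'M[R]_N) (w : 'rV[R]_N) : Prop := w != 0 /\ gdot_co G w w = 0.

Definition lower (G : 'M[R]_N) (k : 'rV[R]_N) : 'rV[R]_N := k *m G^T.

Definition mixed (G T : 'M[R]_N) : 'M[R]_N := T *m invmx G.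

Definition null_cone_preserving (G M : 'M[R]_N) : Prop :=
  forall k, null G k -> k *m M = 0 \/ null G (k *m M).

Definition bi_preserving (G M : 'M[R]_N) : Prop :=
  null_cone_preserving G M /\
  forall k, null G k ->
    let w := (M *m (lower G k)^T)^T in w = 0 \/ null_co G w.

Definition nonsingular (M : 'M[R]_N) : Prop := \det M != 0.

Definition lorentz_transformation (G L : 'M[R]_N) : Prop :=
  L *m G *m L^T = G.

(* time orientation given by a timelike vector tau: a causal v is
   future-pointing iff g(tau, v) > 0 *)
Definition future_pointing (G : 'M[R]_N) (tau v : 'rV[R]_N) : Prop :=
  causal G v /\ 0 < gdot G tau v.

Definition DP (G : 'M[R]_N) (tau : 'rV[R]_N) (T : 'M[R]_N) : Prop :=
  forall u v, future_pointing G tau u -> future_pointing G tau v ->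
    0 <= (u *m T *m v^T) 0 0.

End Defs.

(* Main.v *)
Require Import Defs.
From HB Require Import structures.
From mathcomp Require Import all_boot all_order all_algebra.
From mathcomp Require Import reals ring lra.
Import Order.TTheory GRing.Theory Num.Theory.
Set Implicit Arguments. Unset Strict Implicit. Unset Printing Implicit Defensive.
Local Open Scope ring_scope.

Lemma gdotDl (R : realType) (N : nat) (A : 'M[R]_N) u v w :
  gdot A (u + v) w = gdot A u w + gdot A v w.
Proof. by rewrite /gdot !mulmxDl mxE. Qed.

Lemma gdotDr (R : realType) (N : nat) (A : 'M[R]_N) u v w :
  gdot A w (u + v) = gdot A w u + gdot A w v.
Proof. by rewrite /gdot linearD /= mulmxDr mxE. Qed.

Lemma gdotZl (R : realType) (N : nat) (A : 'M[R]_N) (a : R) u w :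
  gdot A (a *: u) w = a * gdot A u w.
Proof. by rewrite /gdot -!scalemxAl mxE. Qed.

Lemma gdotZr (R : realType) (N : nat) (A : 'M[R]_N) (a : R) u w :
  gdot A w (a *: u) = a * gdot A w u.
Proof. by rewrite /gdot linearZ /= -scalemxAr mxE. Qed.

Lemma gdot0l (R : realType) (N : nat) (A : 'M[R]_N) w : gdot A 0 w = 0.
Proof. by rewrite /gdot !mul0mx mxE. Qed.

Lemma gdotsym (R : realType) (N : nat) (A : 'M[R]_N) u v :
  A^T = A -> gdot A u v = gdot A v u.
Proof.
move=> hA; rewrite /gdot.
rewrite [RHS](_ : _ = ((v *m A *m u^T)^T) 0 0); last by rewrite [RHS]mxE.
by rewrite !trmx_mul trmxK hA mulmxA.
Qed.

Lemma gdot_mul (R : realType) (N : nat) (A X : 'M[R]_N) u v :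
  gdot A (u *m X) (v *m X) = gdot (X *m A *m X^T) u v.
Proof. by rewrite /gdot trmx_mul !mulmxA. Qed.

Lemma gdotZm (R : realType) (N : nat) (A : 'M[R]_N) (a : R) u v :
  gdot (a *: A) u v = a * gdot A u v.
Proof. by rewrite /gdot -scalemxAr -scalemxAl mxE. Qed.

Lemma gdot_delta (R : realType) (N : nat) (A : 'M[R]_N) p q :
  gdot A (delta_mx 0 p) (delta_mx 0 q) = A p q.
Proof. by rewrite /gdot -rowE trmx_delta -colE !mxE. Qed.

Lemma eta_entry (R : realType) n (p q : 'I_n.+1) :
  (eta_mx R n.+1) p q = if p == q then (if p == ord0 then 1 else -1) else 0.
Proof.
rewrite /eta_mx !mxE; case: (p =P q) => [->|_]; last by rewrite mulr0n.
by rewrite mulr1n.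
Qed.
Lemma eta_quad (R : realType) n (a : 'rV[R]_n.+1) :
  gdot (eta_mx R n.+1) a a = a 0 ord0 ^+ 2 - \sum_(i < n) a 0 (lift ord0 i) ^+ 2.
Proof.
rewrite /gdot /eta_mx mul_mx_diag mxE big_ord_recl !mxE /= mulr1 -expr2.
congr (_ + _); rewrite -sumrN; apply: eq_bigr => i _; rewrite !mxE /=.
by rewrite mulrN1 mulNr expr2.
Qed.

Lemma eta_sq (R : realType) n : eta_mx R n.+1 *m eta_mx R n.+1 = 1%:M.
Proof.
apply/matrixP => i j; rewrite {1}/eta_mx mul_mx_diag !mxE.
case: (i =P j) => [->|_]; last by rewrite !mulr0n mul0r.
by rewrite !mulr1n; case: ifP => _; rewrite ?mulr1 ?mulrNN ?mulr1.
Qed.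

Definition psi {R : realType} {N} (P : 'M[R]_N) (v : 'rV[R]_N) := v *m invmx P^T.

Lemma G_unit (R : realType) n (G P : 'M[R]_n.+1) :
  P^T *m G *m P = eta_mx R n.+1 -> G \in unitmx.
Proof.
move=> hPG.
have : eta_mx R n.+1 \in unitmx by case: (mulmx1_unit (eta_sq R n)).
by rewrite -hPG !unitmx_mul => /andP [/andP [_ ->]].
Qed.

Lemma PT_unit (R : realType) N (P : 'M[R]_N) : P \in unitmx -> P^T \in unitmx.
Proof. by rewrite !unitmxE det_tr. Qed.

Lemma transfer (R : realType) N (G P : 'M[R]_N) v w :
  P \in unitmx -> P^T *m G *m P = eta_mx R N ->
  gdot G v w = gdot (eta_mx R N) (psi P v) (psi P w).
Proof.
move=> hP hPG; rewrite /psi gdot_mul -hPG trmx_inv trmxK.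
by rewrite !mulmxA (mulVmx (PT_unit hP)) mul1mx mulmxK.
Qed.

Lemma transfer_inv (R : realType) N (G P : 'M[R]_N) a b :
  P^T *m G *m P = eta_mx R N ->
  gdot G (a *m P^T) (b *m P^T) = gdot (eta_mx R N) a b.
Proof. by move=> hPG; rewrite gdot_mul trmxK hPG. Qed.

Lemma N_G (R : realType) n (G P : 'M[R]_n.+1) z :
  P \in unitmx -> P^T *m G *m P = eta_mx R n.+1 ->
  (psi P z) 0 ord0 = 0 -> gdot G z z <= 0 /\ (gdot G z z = 0 -> z = 0).
Proof.
move=> hP hPG hz; rewrite (transfer z z hP hPG) eta_quad hz expr0n /= sub0r.
rewrite oppr_le0 sumr_ge0 => [|i _]; last exact: sqr_ge0.
split=> // /eqP; rewrite oppr_eq0 => /eqP hs.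
have h0 : psi P z = 0.
  apply/rowP => j; rewrite [RHS]mxE; case: (unliftP ord0 j) => [j'|] ->; first last.
    exact: hz.
  apply/eqP; rewrite -sqrf_eq0; apply/eqP.
  by apply: (psumr_eq0P (fun i _ => sqr_ge0 _) hs).
rewrite -(mulmxKV (PT_unit hP) z); by rewrite /psi in h0; rewrite h0 mul0mx.
Qed.

Definition tt {R : realType} {n} (P : 'M[R]_n.+1) v := (psi P v) 0 ord0.

Lemma tt_lin (R : realType) n (P : 'M[R]_n.+1) a b x y :
  tt P (a *: x + b *: y) = a * tt P x + b * tt P y.
Proof. by rewrite /tt /psi mulmxDl -!scalemxAl !mxE. Qed.

Lemma key_G (R : realType) n (G P : 'M[R]_n.+1) x y :
  G^T = G -> P \in unitmx -> P^T *m G *m P = eta_mx R n.+1 ->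
  (tt P y) ^+ 2 * gdot G x x - 2 * tt P x * tt P y * gdot G x y
     + (tt P x) ^+ 2 * gdot G y y <= 0.
Proof.
move=> hG hP hPG.
pose z := tt P y *: x + (- tt P x) *: y.
have hz : (psi P z) 0 ord0 = 0.
  by rewrite -/(tt P z) /z tt_lin mulrC mulNr addrN.
have [hle _] := N_G hP hPG hz.
move: hle; rewrite /z !(gdotDl, gdotDr, gdotZl, gdotZr) (gdotsym y x hG).
set a := gdot G x x; set b := gdot G x y; set c := gdot G y y.
move=> h; apply: le_trans h; rewrite le_eqVlt; apply/orP; left; apply/eqP; ring.
Qed.

Notation ee p := (delta_mx (0 : 'I_1) p).

Lemma null_quad (R : realType) n (B : 'M[R]_n.+1) :
  B^T = B -> (forall a, gdot (eta_mx R n.+1) a a = 0 -> gdot B a a = 0) ->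
  B = B ord0 ord0 *: eta_mx R n.+1.
Proof.
move=> hB hq.
have sym i j : B j i = B i j by rewrite -{1}hB mxE.
have h0i i : i != ord0 -> B ord0 i = 0 /\ B i i = - B ord0 ord0.
  move=> /negbTE hi; have hi' : (ord0 == i) = false by rewrite eq_sym.
  have h1 := hq (ee ord0 + ee i).
  have h2 := hq (ee ord0 + (-1) *: ee i).
  move: h1 h2; rewrite !(gdotDl, gdotDr, gdotZl, gdotZr, gdot_delta, eta_entry).
  rewrite !eqxx hi hi' (sym ord0 i) => h1 h2.
  move: h1 => /(_ ltac:(lra)) e1; move: h2 => /(_ ltac:(lra)) e2.
  split; lra.
have hij i j : i != ord0 -> j != ord0 -> i != j -> B i j = 0.
  move=> hi0 hj0 hij; have [hi1 hi2] := h0i i hi0; have [hj1 hj2] := h0i j hj0.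
  move: hi0 hj0 hij => /negbTE hi /negbTE hj /negbTE hij.
  have hi' : (ord0 == i) = false by rewrite eq_sym.
  have hj' : (ord0 == j) = false by rewrite eq_sym.
  have hji : (j == i) = false by rewrite eq_sym.
  have h1 := hq (5 *: ee ord0 + 3 *: ee i + 4 *: ee j).
  move: h1; rewrite !(gdotDl, gdotDr, gdotZl, gdotZr, gdot_delta, eta_entry).
  rewrite !eqxx hi hi' hj hj' hij hji (sym ord0 i) (sym ord0 j) (sym i j) hi1 hj1.
  rewrite hi2 hj2 => /(_ ltac:(lra)) e1.
  lra.
apply/matrixP => i j; rewrite mxE eta_entry.
have [->|hi] := eqVneq i ord0; have [->|hj] := eqVneq j ord0.
- by rewrite mulr1.
- by rewrite mulr0; case: (h0i j hj).
- by rewrite (negbTE hi) mulr0 sym; case: (h0i i hi).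
have [<-|hij'] := eqVneq i j.
- by rewrite ?eqxx mulrN1; case: (h0i i hi).
by rewrite mulr0 hij.
Qed.

Lemma conformal (R : realType) N (G M : 'M[R]_N) f u v :
  M *m G *m M^T = f *: G -> gdot G (u *m M) (v *m M) = f * gdot G u v.
Proof. by move=> h; rewrite gdot_mul h gdotZm. Qed.

Lemma mixed_MGMT (R : realType) N (G T : 'M[R]_N) :
  G^T = G -> G \in unitmx ->
  mixed G T *m G *m (mixed G T)^T = T *m invmx G *m T^T.
Proof.
move=> hG hU; rewrite /mixed trmx_mul trmx_inv hG (mulmxKV hU T).
by rewrite mulmxA.
Qed.

Lemma part1 (R : realType) n (G P T : 'M[R]_n.+1) f :
  (2 <= n)%N -> G^T = G -> P \in unitmx -> P^T *m G *m P = eta_mx R n.+1 ->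
  f != 0 -> T *m invmx G *m T^T = f *: G ->
  0 < f /\ T^T *m invmx G *m T = f *: G.
Proof.
move=> hn hG hP hPG hf heq.
have hU := G_unit hPG.
split; last first.
  pose Y := invmx G *m T^T *m invmx G.
  have hY : T *m (f^-1 *: Y) = 1%:M.
    rewrite -scalemxAr /Y !mulmxA heq -scalemxAl (mulmxV hU) scalerA (mulVf hf).
    by rewrite scale1r.
  move/mulmx1C: hY; rewrite -scalemxAl => hY.
  have hY2 : Y *m T = f *: 1%:M.
    by rewrite -hY scalerA (mulfV hf) scale1r.
  rewrite -[LHS](mulKVmx hU).
  have -> : invmx G *m (T^T *m invmx G *m T) = Y *m T by rewrite /Y !mulmxA.
  by rewrite hY2 -scalemxAr mulmx1.
have hconf : mixed G T *m G *m (mixed G T)^T = f *: G by rewrite mixed_MGMT.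
have h1 : (1 < n.+1)%N by apply: ltnW.
have h2 : (2 < n.+1)%N by [].
pose i1 : 'I_n.+1 := Ordinal h1.
pose i2 : 'I_n.+1 := Ordinal h2.
pose x := ee i1 *m P^T *m mixed G T.
pose y := ee i2 *m P^T *m mixed G T.
have hxx : gdot G x x = - f.
  rewrite /x (conformal _ _ hconf) transfer_inv // gdot_delta eta_entry.
  by rewrite eqxx /= mulrN1.
have hyy : gdot G y y = - f.
  rewrite /y (conformal _ _ hconf) transfer_inv // gdot_delta eta_entry.
  by rewrite eqxx /= mulrN1.
have hxy : gdot G x y = 0.
  rewrite /x /y (conformal _ _ hconf) transfer_inv // gdot_delta eta_entry.
  by rewrite /= mulr0.
have hk := key_G x y hG hP hPG.
rewrite hxx hyy hxy in hk.
rewrite lt_def hf /=; rewrite leNgt; apply/negP => hf0.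
have htx : tt P x != 0.
  apply/eqP => h0; have [hle _] := N_G hP hPG h0.
  by move: hle; rewrite hxx oppr_le0 leNgt hf0.
have : 0 < tt P x ^+ 2 by rewrite lt_def sqrf_eq0 htx sqr_ge0.
have : 0 <= tt P y ^+ 2 by exact: sqr_ge0.
nra.
Qed.


Lemma M_unit (R : realType) N (G M : 'M[R]_N) f :
  G \in unitmx -> f != 0 -> M *m G *m M^T = f *: G -> M \in unitmx.
Proof.
move=> hU hf h.
have : M *m (f^-1 *: (G *m M^T *m invmx G)) = 1%:M.
  by rewrite -scalemxAr !mulmxA h -scalemxAl (mulmxV hU) scalerA mulVf // scale1r.
by case/mulmx1_unit.
Qed.

Lemma ncp_of (R : realType) N (G M : 'M[R]_N) f :
  G \in unitmx -> f != 0 -> M *m G *m M^T = f *: G ->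
  nonsingular M /\ null_cone_preserving G M.
Proof.
move=> hU hf h; have hM := M_unit hU hf h.
split; first by move: hM; rewrite unitmxE unitfE.
move=> k [hk0 hkk]; right; split.
  apply: contra hk0 => /eqP h0; apply/eqP.
  by rewrite -(mulmxK hM k) h0 mul0mx.
by rewrite (conformal _ _ h) hkk mulr0.
Qed.

Lemma part2 (R : realType) n (G P T : 'M[R]_n.+1) :
  G^T = G -> P \in unitmx -> P^T *m G *m P = eta_mx R n.+1 ->
  nonsingular (mixed G T) -> null_cone_preserving G (mixed G T) ->
  exists f, f != 0 /\ T *m invmx G *m T^T = f *: G.
Proof.
move=> hG hP hPG hns hncp.
have hU := G_unit hPG.
set M := mixed G T.
pose B := M *m G *m M^T.
pose B' := P^T *m B *m P.
have hB' : B'^T = B'.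
  by rewrite /B' /B !trmx_mul !trmxK hG !mulmxA.
have hq : forall a, gdot (eta_mx R n.+1) a a = 0 -> gdot B' a a = 0.
  move=> a ha.
  have -> : gdot B' a a = gdot G ((a *m P^T) *m M) ((a *m P^T) *m M).
    by rewrite !gdot_mul /B' /B trmxK !mulmxA.
  have [->|hk] := eqVneq (a *m P^T) 0; first by rewrite mul0mx gdot0l.
  have hnull : null G (a *m P^T) by split => //; rewrite transfer_inv.
  by case: (hncp _ hnull) => [->|[_ ->]]; rewrite ?gdot0l.
have hB'e := null_quad hB' hq.
set c := B' ord0 ord0 in hB'e.
have hBc : B = c *: G.
  have -> : B = invmx P^T *m B' *m invmx P.
    by rewrite /B' !mulmxA (mulVmx (PT_unit hP)) mul1mx mulmxK.
  rewrite hB'e -hPG -scalemxAr -scalemxAl !mulmxA (mulVmx (PT_unit hP)) mul1mx.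
  by rewrite mulmxK.
exists c; split; last by rewrite -mixed_MGMT.
apply/eqP => hc0; move: hBc; rewrite hc0 scale0r => /(congr1 (@determinant _ _)).
rewrite det_mulmx (det_mulmx M) det_tr det0; apply/eqP.
by rewrite !mulf_neq0 //; move: hU; rewrite unitmxE unitfE.
Qed.

Lemma tt_ne0 (R : realType) n (G P : 'M[R]_n.+1) x :
  P \in unitmx -> P^T *m G *m P = eta_mx R n.+1 ->
  x != 0 -> 0 <= gdot G x x -> tt P x != 0.
Proof.
move=> hP hPG hx hxx; apply/eqP => h0; have [hle heq] := N_G hP hPG h0.
by move: hx; rewrite heq ?eqxx //; apply/eqP; rewrite eq_le hle hxx.
Qed.

Lemma sign1 (R : realType) n (G P : 'M[R]_n.+1) x y :
  G^T = G -> P \in unitmx -> P^T *m G *m P = eta_mx R n.+1 ->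
  x != 0 -> 0 <= gdot G x x -> 0 < gdot G y y -> 0 < gdot G x y ->
  0 < tt P x * tt P y.
Proof.
move=> hG hP hPG hx hxx hyy hxy.
have hk := key_G x y hG hP hPG.
have htx := tt_ne0 hP hPG hx hxx.
have : 0 < tt P x ^+ 2 by rewrite lt_def sqrf_eq0 htx sqr_ge0.
have : 0 <= tt P y ^+ 2 by exact: sqr_ge0.
move: hk; set a := tt P x; set b := tt P y; set g := gdot G x y.
move=> hk h1 h2.
have h3 : 0 < 2 * a * b * g by nra.
have h4 : 0 < (a * b) * (2 * g) by rewrite (_ : _ * _ = 2 * a * b * g) //; ring.
by move: h4; rewrite pmulr_lgt0 // mulr_gt0.
Qed.

Lemma sign2 (R : realType) n (G P : 'M[R]_n.+1) x y :
  G^T = G -> P \in unitmx -> P^T *m G *m P = eta_mx R n.+1 ->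
  0 <= gdot G x x -> 0 <= gdot G y y ->
  0 <= tt P x * tt P y * gdot G x y.
Proof.
move=> hG hP hPG hxx hyy.
have hk := key_G x y hG hP hPG.
have : 0 <= tt P x ^+ 2 by exact: sqr_ge0.
have : 0 <= tt P y ^+ 2 by exact: sqr_ge0.
nra.
Qed.

Lemma part3 (R : realType) n (G P T : 'M[R]_n.+1) (tau : 'rV[R]_n.+1) f :
  G^T = G -> P \in unitmx -> P^T *m G *m P = eta_mx R n.+1 ->
  0 < gdot G tau tau -> 0 < f -> T *m invmx G *m T^T = f *: G ->
  T^T *m invmx G *m T = f *: G ->
  [/\ bi_preserving G (mixed G T),
      lorentz_transformation G ((Num.sqrt f)^-1 *: mixed G T)
    & DP G tau T \/ DP G tau (- T)].
Proof.
move=> hG hP hPG htau hf heq heq2.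
have hU := G_unit hPG.
have hf0 : f != 0 by rewrite gt_eqF.
set M := mixed G T.
have hconf : M *m G *m M^T = f *: G by rewrite mixed_MGMT.
have hMu := M_unit hU hf0 hconf.
split.
- split; first by case: (ncp_of hU hf0 hconf).
  move=> k [hk0 hkk] /=; right.
  have hw : (M *m (lower G k)^T)^T = k *m (G *m M^T).
    by rewrite /lower !trmx_mul !trmxK hG [RHS]mulmxA.
  rewrite hw; split.
    apply: contra hk0 => /eqP h0; apply/eqP.
    have hGM : G *m M^T \in unitmx by rewrite unitmx_mul hU PT_unit.
    by rewrite -(mulmxK hGM k) h0 mul0mx.
  rewrite /gdot_co -/(gdot (invmx G) _ _) gdot_mul.
  have hMM : M^T *m invmx G *m M = f *: invmx G.
    rewrite /M /mixed trmx_mul trmx_inv hG.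
    have -> : invmx G *m T^T *m invmx G *m (T *m invmx G) =
        invmx G *m (T^T *m invmx G *m T) *m invmx G by rewrite !mulmxA.
    by rewrite heq2 -scalemxAr -scalemxAl (mulVmx hU) mul1mx.
  have -> : G *m M^T *m invmx G *m (G *m M^T)^T = f *: G.
    rewrite (trmx_mul G M^T) trmxK hG.
    have -> : G *m M^T *m invmx G *m (M *m G) = G *m (M^T *m invmx G *m M) *m G
      by rewrite !mulmxA.
    by rewrite hMM -scalemxAr -scalemxAl (mulmxV hU) mul1mx.
  by rewrite gdotZm hkk mulr0.
- rewrite /lorentz_transformation linearZ /= -scalemxAl -scalemxAr -scalemxAl hconf.
  rewrite !scalerA; set s := Num.sqrt f.
  have hs : s ^+ 2 = f by rewrite sqr_sqrtr // ltW.
  have hs0 : s != 0 by apply: contra hf0 => /eqP h; rewrite -hs h expr0n.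
  rewrite -hs -!mulrA mulrA -expr2 -exprMn mulVf // expr1n scale1r //.
have hTM : forall u v, (u *m T *m v^T) 0 0 = gdot G (u *m M) v.
  by move=> u v; rewrite /gdot /M /mixed !mulmxA (mulmxKV hU).
have hsym u v : gdot G u v = gdot G v u by apply: gdotsym.
have hMtt : 0 < gdot G (tau *m M) (tau *m M) by rewrite (conformal _ _ hconf) mulr_gt0.
have htau0 : tau != 0 by apply: contraTneq htau => ->; rewrite gdot0l ltxx.
have htM0 : tau *m M != 0.
  by apply: contraTneq hMtt => ->; rewrite gdot0l ltxx.
have htt1 := tt_ne0 hP hPG htau0 (ltW htau).
have htt2 := tt_ne0 hP hPG htM0 (ltW hMtt).
pose sg := tt P (tau *m M) * tt P tau.
have hsg : sg != 0 by rewrite mulf_neq0.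
have hmain : forall u v, future_pointing G tau u -> future_pointing G tau v ->
    0 <= sg * gdot G (u *m M) v.
  move=> u v [[hu0 huu] hut] [[hv0 hvv] hvt].
  have huM0 : u *m M != 0.
    apply: contra hu0 => /eqP h0; apply/eqP.
    by rewrite -(mulmxK hMu u) h0 mul0mx.
  have huMM : 0 <= gdot G (u *m M) (u *m M) by rewrite (conformal _ _ hconf) mulr_ge0 // ltW.
  have h1 : 0 < tt P (u *m M) * tt P (tau *m M).
    apply: (sign1 (G := G)) => //; rewrite (conformal _ _ hconf) mulr_gt0 // hsym //.
  have h2 : 0 < tt P v * tt P tau.
    by apply: (sign1 (G := G)) => //; rewrite hsym.
  have h3 := sign2 hG hP hPG huMM hvv.
  have h4 : 0 < sg * (tt P (u *m M) * tt P v).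
    rewrite (_ : _ * _ = (tt P (u *m M) * tt P (tau *m M)) * (tt P v * tt P tau)).
      exact: mulr_gt0.
    rewrite /sg; ring.
  move: h3 h4; set a := tt P (u *m M) * tt P v; set g := gdot G (u *m M) v.
  move=> h3 h4.
  have h5 : 0 <= (sg * a) * (a * g) by rewrite mulr_ge0 // ltW.
  have h6 : 0 < a ^+ 2.
    rewrite lt_def sqrf_eq0 sqr_ge0 andbT; apply: contraTneq h4 => ->.
    by rewrite mulr0 ltxx.
  rewrite -(pmulr_lge0 _ h6); move: h5.
  by rewrite (_ : (sg * a) * (a * g) = sg * g * a ^+ 2) //; ring.
have [hpos|hneg] := ltrP 0 sg.
  left => u v hu hv; rewrite hTM.
  have := hmain u v hu hv; by rewrite pmulr_rge0.
right => u v hu hv.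
have hsgn : sg < 0 by rewrite lt_neqAle hsg hneg.
have := hmain u v hu hv; rewrite nmulr_rge0 // -hTM => h.
by rewrite mulmxN mulNmx mxE oppr_ge0.
Qed.

Unset Implicit Arguments.

Theorem mainTheorem10 (R : realType) (N : nat) (G : 'M[R]_N)
    (tau : 'rV[R]_N) (T : 'M[R]_N) :
  (3 <= N)%N -> lorentzian G -> 0 < gdot G tau tau ->
  [/\ (exists f : R, f != 0 /\ T *m invmx G *m T^T = f *: G) <->
        (exists f : R, 0 < f /\ T *m invmx G *m T^T = f *: G
                          /\ T^T *m invmx G *m T = f *: G),
      (exists f : R, 0 < f /\ T *m invmx G *m T^T = f *: G
                        /\ T^T *m invmx G *m T = f *: G) <->
        (nonsingular (mixed G T) /\ null_cone_preserving G (mixed G T))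
    & forall f : R, f != 0 -> T *m invmx G *m T^T = f *: G ->
        [/\ bi_preserving G (mixed G T),
            lorentz_transformation G ((Num.sqrt f)^-1 *: mixed G T)
          & DP G tau T \/ DP G tau (- T)]].
Proof.
case: N G tau T => [//|n] G tau T hn [hG [P [hP hPG]]] htau.
have hU := G_unit hPG.
have p1 : forall f, f != 0 -> T *m invmx G *m T^T = f *: G ->
    0 < f /\ T^T *m invmx G *m T = f *: G.
  by move=> f hf heq; apply: (part1 (P := P)).
split.
- split.
    by move=> [f [hf heq]]; have [h1 h2] := p1 f hf heq; exists f.
  by move=> [f [hf [heq _]]]; exists f; split => //; rewrite gt_eqF.
- split.
    move=> [f [hf [heq _]]]; apply: (ncp_of hU (f := f)); first by rewrite gt_eqF.
    by rewrite mixed_MGMT.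
  move=> [hns hncp]; have [f [hf heq]] := part2 hG hP hPG hns hncp.
  by have [h1 h2] := p1 f hf heq; exists f.
move=> f hf heq; have [h1 h2] := p1 f hf heq.
exact: (part3 (P := P)) hG hP hPG htau h1 heq h2.
Qed.
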